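(* Let $(\Theta,\mathcal{D})$ be a measurable space with a probability measure $\nu$, and let $\mathcal{M}^\Theta=\{P^\theta:\theta\in\Theta\}\subseteq\mathcal{M}_1$ with $\theta\mapsto P^\theta(A)$ measurable for all $A\in\mathcal{F}$, and suppose $\mathcal{M}^\Theta$ is closed under countable convex combinations. Let $\mathbb{P}(A)=\int_\Theta P^\theta(A)\,\nu(\mathrm{d}\theta)$ be the mixture probability measure. Let $\alpha$ be of the form $\alpha(Q)=\widetilde\alpha(Q)$ for $Q\in\mathcal{Q}^{\mathbb{P}}$, $\alpha(Q)=+\infty$ for $Q\in\mathcal{M}_1\setminus\mathcal{Q}^{\mathbb{P}}$, where $\mathcal{Q}^{\mathbb{P}}$ is a weak-$*$-closed subset of $\mathcal{P}^{\mathbb{P}}$, $\widetilde\alpha<\infty$ on $\mathcal{Q}^{\mathbb{P}}$ and $\inf_{\mathcal{Q}^{\mathbb{P}}}\widetilde\alpha>-\infty$. Suppose that for all $A\in\mathcal{F}$ with $\mathbb{P}(A)>0$, $$\mathbb{P}(A)>\int_\Theta\widetilde P_2^\theta(A)\,\nu(\mathrm{d}\theta),$$ where $\widetilde P_2^\theta$ denotes the (unnormalized) singular part of the Lebesgue decomposition of $P^\theta$ with respect to $\mathbb{P}$. Then for all $X\in\mathcal{X}^{\mathcal{M}^\Theta}\cap L^\infty(\mathbb{P})$, $$\widehat\rho^{\mathcal{M}^\Theta}(X)=\widehat\rho^{\mathbb{P}}(X)=\rho^{\mathbb{P}}(X)=\rho^{\mathcal{M}^\Theta}(X).$$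
   Context: $(\Omega,\mathcal{F})$ is a measurable space, $\mathcal{M}_1$ the set of probability measures on it with the topology of weak (weak-$*$) convergence, $\mathcal{X}$ the space of pointwise bounded $\mathcal{F}$-measurable real functions, $L^\infty(P)=L^\infty(\Omega,\mathcal{F},P)$, $\mathcal{P}^P=\{Q\in\mathcal{M}_1:Q\ll P\}$. With $\alpha$ as in the claim, $\rho(X)=\sup_{Q\in\mathcal{M}_1}\{\mathbb{E}_Q[-X]-\alpha(Q)\}$ on $\mathcal{X}$ (assumed real-valued). For $P\in\mathcal{M}_1$, $X\in L^\infty(P)$: $\rho^P(X)=\inf_{\{\widetilde X\in\mathcal{X}:P(\widetilde X=X)=1\}}\rho(\widetilde X)$ and $\widehat\rho^P(X)=\sup_{Q\in\mathcal{P}^P}\{\mathbb{E}_Q[-X]-\alpha(Q)\}$. For $\mathcal{M}\subseteq\mathcal{M}_1$: $\mathcal{X}^{\mathcal{M}}=\bigcap_{P\in\mathcal{M}}L^\infty(P)$, $\rho^{\mathcal{M}}(X)=\sup_{P\in\mathcal{M}}\rho^P(X)$, $\widehat\rho^{\mathcal{M}}(X)=\sup_{P\in\mathcal{M}}\widehat\rho^P(X)$. Closed under countable convex combinations: $\sum_i\lambda_iP_i\in\mathcal{M}^\Theta$ for $P_i\in\mathcal{M}^\Theta$, $\lambda_i\ge0$, $\sum\lambda_i=1$. *)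

(* Defs.v *)
From HB Require Import structures.
From mathcomp Require Import all_boot all_order all_algebra.
From mathcomp Require Import all_classical all_reals all_analysis measurable_realfun.
Set Implicit Arguments. Unset Strict Implicit. Unset Printing Implicit Defensive.
Import Order.TTheory GRing.Theory Num.Theory.
Import numFieldNormedType.Exports.
Local Open Scope classical_set_scope.
Local Open Scope ring_scope.
Local Open Scope ereal_scope.

Section defs.
Context {d : measure_display} {T : measurableType d} {R : realType}.

Definition bdd_meas (X : T -> R) : Prop :=
  measurable_fun setT X /\ exists M : R, forall w, (`|X w| <= M)%R.

(* X ∈ L^∞(P) : measurable and P-essentially bounded (represented by a function) *)
Definition Linf (P : probability T R) (X : T -> R) : Prop :=
  measurable_fun setT X /\ exists M : R, {ae P, forall w, (`|X w| <= M)%R}.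

Definition expect (Q : probability T R) (Y : T -> R) : \bar R :=
  \int[Q]_w (Y w)%:E.

(* closedness in M_1 for the weak topology σ(M_1, 𝒳): the complement is open,
   i.e. every Q outside C has a basic neighbourhood
   {Q' : |E_Q'[f_i] - E_Q[f_i]| < e, i < n} (f_i ∈ 𝒳) disjoint from C *)
Definition weak_closed (C : set (probability T R)) : Prop :=
  forall Q, ~ C Q ->
    exists (n : nat) (f : nat -> T -> R) (e : R),
      (0 < e)%R /\ (forall i, (i < n)%N -> bdd_meas (f i)) /\
      forall Q' : probability T R,
        (forall i, (i < n)%N ->
           `| expect Q' (f i) - expect Q (f i) | < e%:E) -> ~ C Q'.

Definition rho (alpha : probability T R -> \bar R) (X : T -> R) : \bar R :=
  ereal_sup [set expect Q (fun w => - X w)%R - alpha Q | Q in [set: probability T R]].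

Definition rhoP (alpha : probability T R -> \bar R) (P : probability T R)
  (X : T -> R) : \bar R :=
  ereal_inf [set rho alpha Xt | Xt in
    [set Xt | bdd_meas Xt /\ P [set w | Xt w = X w] = 1]].

Definition rhohatP (alpha : probability T R -> \bar R) (P : probability T R)
  (X : T -> R) : \bar R :=
  ereal_sup [set expect Q (fun w => - X w)%R - alpha Q |
               Q in [set Q : probability T R | Q `<< P]].

Definition rhoM (alpha : probability T R -> \bar R) (M : set (probability T R))
  (X : T -> R) : \bar R :=
  ereal_sup [set rhoP alpha P X | P in M].

Definition rhohatM (alpha : probability T R -> \bar R) (M : set (probability T R))
  (X : T -> R) : \bar R :=
  ereal_sup [set rhohatP alpha P X | P in M].

Definition msingular (mu nu : set T -> \bar R) : Prop :=
  exists N, measurable N /\ mu N = 0 /\ nu (~` N) = 0.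

Definition lebesgue_singular_part (mu nu : set T -> \bar R)
  (Ps : {measure set T -> \bar R}) : Prop :=
  (exists Pa : {measure set T -> \bar R},
      Pa `<< nu /\ forall A, measurable A -> mu A = Pa A + Ps A) /\
  msingular Ps nu.

End defs.

(* Main.v *)
Require Import Defs.
From HB Require Import structures.
From mathcomp Require Import all_boot all_order all_algebra.
From mathcomp Require Import all_classical all_reals all_analysis measurable_realfun.
Import Order.TTheory GRing.Theory Num.Theory.
Import numFieldNormedType.Exports.
Local Open Scope classical_set_scope.
Local Open Scope ring_scope.
Local Open Scope ereal_scope.

Section core.
Context (d : measure_display) (Omega : measurableType d) (R : realType).

Definition nullv (Pm P : set Omega -> \bar R) :=
  ereal_sup [set Pm A | A in [set A | measurable A /\ P A = 0]].

Lemma small_inv {RR : realType} (e : RR) : (0 < e)%R -> exists n : nat, ((n.+1%:R)^-1 < e)%R.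
Proof.
move=> e0; exists (Num.truncn e^-1).
rewrite -[ltRHS]invrK ltf_pV2 ?posrE ?invr_gt0 ?ltr0Sn //.
exact: truncnS_gt.
Qed.

Lemma nullv_attained (Pm P : probability Omega R) :
  exists A, measurable A /\ P A = 0 /\ Pm A = nullv Pm P.
Proof.
set v := nullv Pm P.
have v0 : 0 <= v by apply: ereal_sup_ubound; exists set0 => //; rewrite measure0.
have v1 : v <= 1.
  by apply: ge_ereal_sup => _ [A [mA _] <-]; exact: probability_le1.
have vfin : v \is a fin_num by rewrite ge0_fin_numE// (le_lt_trans v1)// ltey.
have /choice [F hF] : forall n : nat, exists A,
    (measurable A /\ P A = 0) /\ v - ((n.+1%:R)^-1)%:E < Pm A.
  move=> n; have e0 : (0 < (n.+1%:R)^-1 :> R)%R by rewrite invr_gt0 ltr0Sn.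
  have [_ [A hA <-] h] := ub_ereal_sup_adherent e0 vfin.
  by exists A.
have mF : forall n, measurable (F n) by move=> n; case: (hF n) => -[].
have mB : measurable (\bigcup_n F n) by exact: bigcupT_measurable.
have PB : P (\bigcup_n F n) = 0.
  apply/eqP; rewrite eq_le measure_ge0 andbT.
  rewrite (le_trans (measure_sigma_subadditive _ mF mB _))//.
  by rewrite eseries0// => n _ _; case: (hF n) => -[].
exists (\bigcup_n F n); split => //; split => //.
apply/eqP; rewrite eq_le; apply/andP; split.
  by apply: ereal_sup_ubound; exists (\bigcup_n F n).
apply/lee_subgt0Pr => e e0.
have [n hn] := small_inv e e0.
case: (hF n) => _ /ltW h.
rewrite (le_trans _ (le_trans h _))//.
  by rewrite leeB// lee_fin ltW.
by apply: le_measure; rewrite ?inE//; exact: bigcup_sup.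
Qed.


Lemma geom_sum1 : \sum_(0 <= i <oo) ((1 / (2 ^ (i + 1))%:R : R)%:E) = 1.
Proof.
have h := @cvg_geometric_eseries_half R 1 0.
rewrite expr0 divr1 in h.
by apply/cvg_lim => //.
Qed.

Lemma nneseries_term0 (u : (\bar R)^nat) : (forall i, 0 <= u i) ->
  \sum_(0 <= i <oo) u i = 0 -> forall i, u i = 0.
Proof.
move=> u0 s0 i; apply/eqP; rewrite eq_le u0 andbT.
have := @nneseries_lim_ge R u xpredT 0 i.+1 (fun n _ _ => u0 n).
rewrite big_nat_recr//= s0 => h; rewrite (le_trans _ h)// leeDr//.
by rewrite big_seq_cond; apply: sume_ge0 => j _.
Qed.

End core.

Section rhos.
Context {d : measure_display} {Omega : measurableType d} {R : realType}.

Lemma meas_eqset {f g : Omega -> R} : measurable_fun setT f -> measurable_fun setT g ->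
  measurable [set w | f w = g w].
Proof.
move=> mf mg.
have := @measurable_eqe _ _ R setT measurableT (EFin \o f) (EFin \o g)
  ((measurable_EFinP _ _).2 mf) ((measurable_EFinP _ _).2 mg).
rewrite setTI; congr measurable; apply/seteqP; split=> w /=.
  by case.
by move=> ->.
Qed.

Lemma expect_ae {Q P : probability Omega R} {Xt X : Omega -> R} :
  Q `<< P -> measurable_fun setT X -> measurable_fun setT Xt ->
  P [set w | Xt w = X w] = 1 ->
  expect Q (fun w => - Xt w)%R = expect Q (fun w => - X w)%R.
Proof.
move=> QP mX mXt P1.
have mS := meas_eqset mXt mX.
have PC : P (~` [set w | Xt w = X w]) = 0.
  by rewrite probability_setC// P1 subee.
have QC : Q (~` [set w | Xt w = X w]) = 0.
  exact: ((null_content_dominatesP _ _).1 QP _ (measurableC mS) PC).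
rewrite /expect; apply: ae_eq_integral => //.
- by apply/measurable_EFinP; exact: measurable_funN.
- by apply/measurable_EFinP; exact: measurable_funN.
- exists (~` [set w | Xt w = X w]); split => //; first exact: measurableC.
  by move=> w /= h hw; apply: h => _; rewrite hw.
Qed.


Lemma trunc_props {X : Omega -> R} {M : R} : measurable_fun setT X -> (0 <= M)%R ->
  let Xt := (cst (- M)%R) \max ((cst M) \min X) in
  [/\ measurable_fun setT Xt, (forall w, `|Xt w| <= M)%R &
      forall w, (`|X w| <= M)%R -> Xt w = X w].
Proof.
move=> mX M0 Xt; split.
- apply: measurable_maxr; first exact: measurable_cst.
  by apply: measurable_minr => //; exact: measurable_cst.
- move=> w; rewrite /Xt /= ler_norml; apply/andP; split.
    by rewrite le_max lexx.
  rewrite ge_max ge_min lexx /= andbT.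
  by rewrite lerNl (le_trans _ M0)// oppr_le0.
- move=> w; rewrite ler_norml => /andP[h1 h2].
  by rewrite /Xt /= (min_r h2) (max_r h1).
Qed.

Lemma ae_bound_set {P : probability Omega R} {X Xt : Omega -> R} {M : R} :
  measurable_fun setT X -> measurable_fun setT Xt ->
  {ae P, forall w, (`|X w| <= M)%R} ->
  (forall w, (`|X w| <= M)%R -> Xt w = X w) ->
  P [set w | Xt w = X w] = 1.
Proof.
move=> mX mXt [N [mN PN sN]] hXt.
have mS := meas_eqset mXt mX.
apply/eqP; rewrite eq_le probability_le1//=.
have PC : P (~` N) = 1 by rewrite probability_setC// PN sube0.
apply: (@le_trans _ _ (P (~` N))); first by rewrite PC.
apply: le_measure; rewrite ?inE//; first exact: measurableC.
move=> w /= nN; apply: hXt.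
by apply: contra_notP nN => h; apply: sN.
Qed.

End rhos.

Section exist.
Context {d : measure_display} {Omega : measurableType d} {R : realType}
  {dT : measure_display} {Theta : measurableType dT}
  {nu : probability Theta R}
  {Pth : Theta -> probability Omega R}
  {Pmix : probability Omega R}
  {P2 : Theta -> {measure set Omega -> \bar R}}.
Hypothesis hconv : forall (th : nat -> Theta) (lam : nat -> R),
     (forall i, 0 <= lam i)%R ->
     \sum_(0 <= i <oo) (lam i)%:E = 1 ->
     exists th0, forall A, measurable A ->
       Pth th0 A = \sum_(0 <= i <oo) (lam i)%:E * Pth (th i) A.
Hypothesis hmix : forall A, measurable A -> Pmix A = \int[nu]_th Pth th A.
Hypothesis hdec : forall th, lebesgue_singular_part (Pth th) Pmix (P2 th).
Hypothesis hsing : forall A, measurable A -> 0 < Pmix A ->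
     \int[nu]_th P2 th A < Pmix A.

Lemma comb (th : nat -> Theta) : exists th0, forall A, measurable A ->
  Pth th0 A = 0 -> forall i, Pth (th i) A = 0.
Proof.
have lam0 : forall i, (0 <= 1 / (2 ^ (i + 1))%:R :> R)%R.
  by move=> i; rewrite divr_ge0.
have [th0 h0] := hconv th _ lam0 (geom_sum1 R).
exists th0 => A mA PA i.
have H := @nneseries_term0 R (fun i => (1 / (2 ^ (i + 1))%:R : R)%:E * Pth (th i) A)
  (fun j => mule_ge0 (eqbRL (lee_fin _ _) (lam0 j)) (measure_ge0 _ _)) (etrans (esym (h0 A mA)) PA) i.
move/eqP: H; rewrite mule_eq0 eqe div1r invr_eq0 pnatr_eq0 expn_eq0 /=.
by move/eqP.
Qed.


Let v th := @nullv _ _ _ Pmix (Pth th).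

Lemma v_ge0 th : 0 <= v th.
Proof. by apply: ereal_sup_ubound; exists set0 => //; rewrite measure0. Qed.

Lemma v_le1 th : v th <= 1.
Proof. by apply: ge_ereal_sup => _ [A [mA _] <-]; exact: probability_le1. Qed.

Lemma v_mono th th' : (forall A, measurable A -> Pth th A = 0 -> Pth th' A = 0) ->
  v th <= v th'.
Proof.
move=> h; apply: ereal_sup_le => _ [A [mA PA] <-]; exists A => //; split => //.
exact: h.
Qed.

Lemma v_ub th A : measurable A -> Pth th A = 0 -> Pmix A <= v th.
Proof. by move=> mA PA; apply: ereal_sup_ubound; exists A. Qed.

Lemma Theta_inhabited : exists th : Theta, True.
Proof.
case: (pselect (exists th : Theta, True)) => // nth.
have T0 : [set: Theta] = set0.
  by apply/seteqP; split=> x // _; apply: nth; exists x.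
have := probability_setT nu; rewrite T0 measure0 => /eqP.
by rewrite eqe eq_sym oner_eq0.
Qed.

Lemma exists_dominating : exists th0, forall A, measurable A ->
  Pth th0 A = 0 -> Pmix A = 0.
Proof.
have [tha _] := Theta_inhabited.
set vs := ereal_inf (range v).
have vs0 : 0 <= vs by apply: le_ereal_inf_tmp => _ [th _ <-]; exact: v_ge0.
have vs1 : vs <= 1 by rewrite (le_trans _ (v_le1 tha))//; apply: ereal_inf_lbound; exists tha.
have vsfin : vs \is a fin_num by rewrite ge0_fin_numE// (le_lt_trans vs1)// ltey.
have /choice [th hth] : forall n : nat, exists th,
    v th < vs + ((n.+1%:R)^-1)%:E.
  move=> n; have e0 : (0 < (n.+1%:R)^-1 :> R)%R by rewrite invr_gt0 ltr0Sn.
  have [_ [th _ <-] h] := lb_ereal_inf_adherent e0 vsfin.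
  by exists th.
have [th0 h0] := comb th.
have v0E : v th0 = vs.
  apply/eqP; rewrite eq_le; apply/andP; split; last first.
    by apply: ereal_inf_lbound; exists th0.
  apply/lee_addgt0Pr => e e0.
  have [n hn] := small_inv e e0.
  rewrite (le_trans (@v_mono th0 (th n) _))//.
    by move=> A mA /(h0 A mA); apply.
  by rewrite (le_trans (ltW (hth n)))// leeD2l// lee_fin ltW.
have v00 : v th0 = 0.
  apply/eqP; rewrite eq_le v_ge0 andbT leNgt; apply/negP => vpos.
  have [As [mAs [PAs PmAs]]] := @nullv_attained _ _ _ Pmix (Pth th0).
  have hpos : 0 < Pmix As by rewrite PmAs.
  have [th1 lt1] : exists th1, P2 th1 As < Pth th1 As.
    case: (pselect (exists th1, P2 th1 As < Pth th1 As)) => // nex; exfalso.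
    have E : (fun t => P2 t As) = (fun t => Pth t As).
      apply/funext => t; have [[Pa [_ hPa]] _] := hdec t.
      apply/eqP; rewrite eq_le; apply/andP; split.
        by rewrite hPa// leeDr.
      by rewrite leNgt; apply/negP => h; apply: nex; exists t.
    by have := hsing _ mAs hpos; rewrite E -hmix// ltxx.
  have [[Pa [Padom hPa]] _] := hdec th1.
  have Pa_pos : 0 < Pa As.
    rewrite lt_neqAle measure_ge0 andbT; apply/negP => /eqP Pa0.
    by move: lt1; rewrite hPa// -Pa0 add0e ltxx.
  have [th' h'] := comb (fun i => if i == 0%N then th0 else th1).
  have h'0 A mA P'A : Pth th0 A = 0 := h' A mA P'A 0%N.
  have h'1 A mA P'A : Pth th1 A = 0 := h' A mA P'A 1%N.
  have v'E : v th' = v th0.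
    apply/eqP; rewrite eq_le; apply/andP; split; first exact: v_mono.
    by rewrite v0E; apply: ereal_inf_lbound; exists th'.
  have [A' [mA' [PA' PmA']]] := @nullv_attained _ _ _ Pmix (Pth th').
  have P0A' := h'0 _ mA' PA'.
  have P1A' := h'1 _ mA' PA'.
  have mU : measurable (As `|` A') by exact: measurableU.
  have PU0 : Pth th0 (As `|` A') = 0.
    apply/eqP; rewrite eq_le measure_ge0 andbT.
    rewrite (le_trans (measureU2 _ _ _))// [X in X + _](_ : _ = 0); last exact: PAs.
    by rewrite [X in _ + X](_ : _ = 0) ?adde0 //; exact: P0A'.
  have PmU := @v_ub th0 _ mU PU0.
  have mD : measurable ((As `|` A') `\` A') by exact: measurableD.
  have PmD : Pmix ((As `|` A') `\` A') = 0.
    apply/eqP; rewrite eq_le measure_ge0 andbT.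
    rewrite measureD// ?setIidr//; last by rewrite -ge0_fin_numE ?fin_num_measure.
    have PA'v : Pmix A' = v th0 by rewrite -v'E; exact: PmA'.
    rewrite leeBlDr ?fin_num_measure// add0e; apply: (le_trans PmU).
    by rewrite le_eqVlt; apply/orP; left; apply/eqP; exact: (esym PA'v).
  have PaD : Pa ((As `|` A') `\` A') = 0.
    exact: ((null_content_dominatesP _ _).1 Padom).
  have PaA' : Pa A' <= 0.
    by rewrite -P1A' hPa// leeDl.
  have sub : As `<=` A' `|` ((As `|` A') `\` A').
    move=> x Ax; case: (pselect (A' x)) => [|nA]; first by left.
    by right; split => //; left.
  have : Pa As <= Pa (A' `|` ((As `|` A') `\` A')).
    by apply: le_measure; rewrite ?inE//; exact: measurableU.
  move=> /le_trans h; have : Pa As <= 0.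
    apply: h; rewrite (le_trans (measureU2 _ _ _))//.
    rewrite [X in _ + X](_ : _ = 0); first by rewrite adde0.
    exact: PaD.
  by rewrite leNgt Pa_pos.
exists th0 => A mA PA.
apply/eqP; rewrite eq_le measure_ge0 andbT.
by rewrite -v00; exact: v_ub.
Qed.

End exist.

Section rhos2.
Context {d : measure_display} {Omega : measurableType d} {R : realType}.
Context {alpha : probability Omega R -> \bar R} {QP : set (probability Omega R)}
  {Pmix : probability Omega R} {X : Omega -> R}.
Hypothesis hQP : forall Q, QP Q -> Q `<< Pmix.
Hypothesis hout : forall Q, ~ QP Q -> alpha Q = +oo.
Hypothesis mX : measurable_fun setT X.

Let H := rhohatP alpha Pmix X.

Lemma term_out Q f : ~ QP Q -> expect Q f - alpha Q = -oo.
Proof. by move=> nQ; rewrite hout//= addeNy. Qed.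

Lemma rho_le_H Xt : measurable_fun setT Xt -> Pmix [set w | Xt w = X w] = 1 ->
  rho alpha Xt <= H.
Proof.
move=> mXt P1; apply: ge_ereal_sup => _ [Q _ <-].
case: (pselect (QP Q)) => hq; last by rewrite term_out// leNye.
rewrite (expect_ae (hQP _ hq) mX mXt P1).
by apply: ereal_sup_ubound; exists Q => //; exact: hQP.
Qed.

Lemma H_le_rho (P : probability Omega R) Xt : Pmix `<< P -> measurable_fun setT Xt ->
  P [set w | Xt w = X w] = 1 -> H <= rho alpha Xt.
Proof.
move=> dom mXt P1; apply: ge_ereal_sup => _ [Q hQ <-].
case: (pselect (QP Q)) => hq; last by rewrite term_out// leNye.
rewrite -(expect_ae (null_dominates_trans hQ dom) mX mXt P1).
by apply: ereal_sup_ubound; exists Q.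
Qed.

Lemma rhohat_le_H (P : probability Omega R) : rhohatP alpha P X <= H.
Proof.
apply: ge_ereal_sup => _ [Q hQ <-].
case: (pselect (QP Q)) => hq; last by rewrite term_out// leNye.
by apply: ereal_sup_ubound; exists Q => //; exact: hQP.
Qed.

Lemma H_le_rhohat (P : probability Omega R) : Pmix `<< P -> H <= rhohatP alpha P X.
Proof.
move=> dom; apply: ge_ereal_sup => _ [Q hQ <-].
by apply: ereal_sup_ubound; exists Q => //; exact: (null_dominates_trans hQ dom).
Qed.

Lemma H_le_rhoP (P : probability Omega R) : Pmix `<< P -> H <= rhoP alpha P X.
Proof.
move=> dom; apply: le_ereal_inf_tmp => _ [Xt [[mXt _] P1] <-].
exact: (@H_le_rho P Xt dom mXt P1).
Qed.

Lemma rhoP_le_H (P : probability Omega R) : Linf P X -> Linf Pmix X ->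
  rhoP alpha P X <= H.
Proof.
move=> [_ [M1 h1]] [_ [M2 h2]].
set M := Num.max (Num.max M1 M2) 0%R.
have M0 : (0 <= M)%R by rewrite le_max lexx orbT.
have [mXt bXt eXt] := trunc_props mX M0.
set Xt := (cst (- M)%R) \max ((cst M) \min X) in mXt bXt eXt.
have hM1 : forall w, (`|X w| <= M1)%R -> (`|X w| <= M)%R.
  by move=> w h; rewrite (le_trans h)// le_max le_max lexx.
have hM2 : forall w, (`|X w| <= M2)%R -> (`|X w| <= M)%R.
  by move=> w h; rewrite (le_trans h)// le_max le_max lexx orbT.
apply: (@le_trans _ _ (rho alpha Xt)).
  apply: ereal_inf_lbound; exists Xt => //; split.
    by split => //; exists M.
  by apply: (ae_bound_set mX mXt h1) => w /hM1 /eXt.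
apply: rho_le_H => //.
by apply: (ae_bound_set mX mXt h2) => w /hM2 /eXt.
Qed.

End rhos2.

Theorem corollary6p14
  (d : measure_display) (Omega : measurableType d) (R : realType)
  (dT : measure_display) (Theta : measurableType dT)
  (nu : probability Theta R)
  (Pth : Theta -> probability Omega R)
  (Pmix : probability Omega R)
  (QP : set (probability Omega R))
  (alphat alpha : probability Omega R -> \bar R)
  (P2 : Theta -> {measure set Omega -> \bar R}) :
  (* θ ↦ P^θ(A) is measurable for every A ∈ F *)
  (forall A, measurable A -> measurable_fun [set: Theta] (fun th => Pth th A)) ->
  (* M^Θ is closed under countable convex combinations *)
  (forall (th : nat -> Theta) (lam : nat -> R),
     (forall i, 0 <= lam i)%R ->
     \sum_(0 <= i <oo) (lam i)%:E = 1 ->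
     exists th0, forall A, measurable A ->
       Pth th0 A = \sum_(0 <= i <oo) (lam i)%:E * Pth (th i) A) ->
  (* the mixture ℙ(A) = ∫ P^θ(A) ν(dθ) *)
  (forall A, measurable A -> Pmix A = \int[nu]_th Pth th A) ->
  (* Q^ℙ ⊆ P^ℙ, weak-* closed *)
  (forall Q, QP Q -> Q `<< Pmix) ->
  weak_closed QP ->
  (* form of α *)
  (forall Q, QP Q -> alpha Q = alphat Q) ->
  (forall Q, ~ QP Q -> alpha Q = +oo) ->
  (forall Q, QP Q -> alphat Q < +oo) ->
  -oo < ereal_inf (alphat @` QP) ->
  (* standing assumption: ρ is real-valued on 𝒳 *)
  (forall X : Omega -> R, bdd_meas X -> rho alpha X \is a fin_num) ->
  (* P2 θ is the singular part of the Lebesgue decomposition of P^θ w.r.t. ℙ *)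
  (forall th, lebesgue_singular_part (Pth th) Pmix (P2 th)) ->
  (forall A, measurable A -> 0 < Pmix A ->
     \int[nu]_th P2 th A < Pmix A) ->
  forall X : Omega -> R,
    (forall th, Linf (Pth th) X) -> Linf Pmix X ->
    let M := range Pth in
    rhohatM alpha M X = rhohatP alpha Pmix X /\
    rhohatP alpha Pmix X = rhoP alpha Pmix X /\
    rhoP alpha Pmix X = rhoM alpha M X.
Proof.
move=> hmeas hconv hmix hQP _ _ hout _ _ _ hdec hsing X hLinf hLinfm M.
have mX := hLinfm.1.
have [th0 h0] := exists_dominating hconv hmix hdec hsing.
have dom : Pmix `<< Pth th0 by exact/null_content_dominatesP.
have domm : Pmix `<< Pmix by [].
split; [|split].
- apply/eqP; rewrite eq_le; apply/andP; split.
    by apply: ge_ereal_sup => _ [_ [th _ <-] <-]; exact: (rhohat_le_H hQP hout).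
  apply: (le_trans (@H_le_rhohat _ _ _ alpha Pmix X _ dom)).
  by apply: ereal_sup_ubound; exists (Pth th0) => //; exists th0.
- apply/eqP; rewrite eq_le; apply/andP; split.
    exact: (@H_le_rhoP _ _ _ alpha QP Pmix X hout mX Pmix domm).
  exact: (@rhoP_le_H _ _ _ alpha QP Pmix X hQP hout mX Pmix hLinfm hLinfm).
- apply/eqP; rewrite eq_le; apply/andP; split.
    rewrite (le_trans (@rhoP_le_H _ _ _ alpha QP Pmix X hQP hout mX Pmix hLinfm hLinfm))//.
    apply: (le_trans (@H_le_rhoP _ _ _ alpha QP Pmix X hout mX (Pth th0) dom)).
    by apply: ereal_sup_ubound; exists (Pth th0) => //; exists th0.
  apply: ge_ereal_sup => _ [_ [th _ <-] <-].
  apply: (le_trans (@rhoP_le_H _ _ _ alpha QP Pmix X hQP hout mX (Pth th) (hLinf th) hLinfm)).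
  exact: (@H_le_rhoP _ _ _ alpha QP Pmix X hout mX Pmix domm).
Qed.
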